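(* Let $P$ be a finite poset and let $P'$ be a poset with $P\subseteq P'\subseteq S_N(S_N(P))$ (as induced subposets). Then $N_{diag}(P')\subseteq N_{diag}(P)\cup A(P)$.
   Context: For a poset $P$, $x\prec y$ means $x<y$ with no $z$ satisfying $x<z<y$; $\mathrm{Diag}(P)$ is the set of covering pairs $(x,y)$, and $\mathrm{Inc}(P)$ the set of pairs of incomparable elements. Four elements $a,b,c,d$ form an $N$ in $P$ if $b\prec c$, $a\prec c$, $b\prec d$ and $(a,d)\in\mathrm{Inc}(P)$; $(b,c)$ is the diagonal edge of this $N$. $N_{diag}(P)$ is the set of diagonal edges of all $N$'s in $P$. $S_N(P)$ is the poset obtained from $P$ by adding one new (dummy) vertex $u$ on each edge $(b,c)\in N_{diag}(P)$ (so that $b\prec u\prec c$), with the induced order; thus $P\subseteq S_N(P)\subseteq S_N(S_N(P))$. $A(P)$ is the set of pairs $(b,c)\in\mathrm{Diag}(P)\setminus N_{diag}(P)$ for which there exist $a,d\in P$ with $a<c$, $b<d$, $(a,b),(c,d)\in\mathrm{Inc}(P)$, and either $(a,c)\in N_{diag}(P)$ or $(b,d)\in N_{diag}(P)$. *)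

(* Defs.v *)
(* A finite poset is a finType T with a partial order
   relation le : rel T.  Subposets are represented by a carrier set
   S : {set T} with the induced order (le restricted to S). *)
From mathcomp Require Import all_boot.
Set Implicit Arguments. Unset Strict Implicit. Unset Printing Implicit Defensive.

Section Posets.
Variables (T : finType) (S : {set T}) (le : rel T).

Definition plt (x y : T) : bool := le x y && (x != y).

Definition covers (x y : T) : bool :=
  [&& x \in S, y \in S, plt x y & ~~ [exists z in S, plt x z && plt z y]].

Definition incomp (x y : T) : bool :=
  [&& x \in S, y \in S, ~~ le x y & ~~ le y x].

Definition isN (a b c d : T) : bool :=
  [&& covers b c, covers a c, covers b d & incomp a d].

Definition ndiag (p : T * T) : bool :=
  [exists a, exists d, isN a p.1 p.2 d].

Definition Ndiag : {set T * T} := [set p | ndiag p].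

Definition inA (p : T * T) : bool :=
  [&& covers p.1 p.2, ~~ ndiag p &
    [exists a in S, exists d in S,
      [&& plt a p.2, plt p.1 d, incomp a p.1, incomp p.2 d &
          ndiag (a, p.2) || ndiag (p.1, d)]]].

Definition Aset : {set T * T} := [set p | inA p].

End Posets.

(* S_N: new carrier type T + T*T, the dummy vertex on the diagonal edge
   (b,c) being inr (b,c).  Order: b < u < c, with induced order. *)
Definition SNT (T : finType) : finType := (T + T * T)%type.

Definition SN_le (T : finType) (le : rel T) : rel (SNT T) :=
  fun x y =>
    match x, y with
    | inl x, inl y => le x y
    | inl x, inr q => le x q.1
    | inr p, inl y => le p.2 y
    | inr p, inr q => (p == q) || le p.2 q.1
    end.

Definition SN_set (T : finType) (S : {set T}) (le : rel T) : {set SNT T} :=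
  (@inl T (T * T)) @: S :|: (@inr T (T * T)) @: Ndiag S le.

Definition emb2 (T : finType) (x : T) : SNT (SNT T) := inl (inl x).

Definition po_refl (T : finType) (le : rel T) := forall x, le x x.
Definition po_antisym (T : finType) (le : rel T) :=
  forall x y, le x y -> le y x -> x = y.
Definition po_trans (T : finType) (le : rel T) :=
  forall x y z, le x y -> le y z -> le x z.

(* Main.v *)
Require Import Defs.
From mathcomp Require Import all_boot.
Set Implicit Arguments. Unset Strict Implicit. Unset Printing Implicit Defensive.

Section P.
Variables (T : finType) (le : rel T).
Hypotheses (Hr : po_refl le) (Ha : po_antisym le) (Ht : po_trans le).
Local Notation cov := (covers [set: T] le).
Local Notation inc := (incomp [set: T] le).
Local Notation nd := (ndiag [set: T] le).
Local Notation plt := (plt le).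

Lemma pltE x y : plt x y = le x y && (x != y). Proof. by []. Qed.

Lemma covE x y : cov x y -> plt x y.
Proof. by case/and4P. Qed.

Lemma cov_nb x y z : cov x y -> plt x z -> plt z y -> False.
Proof.
case/and4P=> _ _ _ /existsPn H h1 h2.
by move: (H z); rewrite in_setT h1 h2.
Qed.

Lemma covI x y : plt x y -> (forall z, plt x z -> plt z y -> False) -> cov x y.
Proof.
move=> h H; rewrite /covers !in_setT h /=.
apply/existsPn=> z; rewrite in_setT /=; apply/negP=> /andP[h1 h2]; exact: H h1 h2.
Qed.

Lemma incI x y : ~~ le x y -> ~~ le y x -> inc x y.
Proof. by move=> h1 h2; rewrite /incomp !in_setT h1 h2. Qed.

Lemma incE x y : inc x y -> ~~ le x y /\ ~~ le y x.
Proof. by case/and4P. Qed.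

Lemma ndI a b c d : cov b c -> cov a c -> cov b d -> inc a d -> nd (b,c).
Proof. by move=> h1 h2 h3 h4; apply/existsP; exists a; apply/existsP; exists d; rewrite /isN h1 h2 h3 h4. Qed.

Lemma ndE b c : nd (b,c) -> exists a d, [/\ cov b c, cov a c, cov b d & inc a d].
Proof. by case/existsP=> a /existsP [d /and4P [h1 h2 h3 h4]]; exists a, d. Qed.

Lemma plt_trans x y z : plt x y -> le y z -> plt x z.
Proof.
rewrite !pltE => /andP [h1 h2] h3; rewrite (Ht h1 h3) /=.
apply/eqP=> E; subst z; move/eqP: h2; apply; exact: Ha.
Qed.

Lemma ex_cov_above x y : plt x y -> exists v, cov x v && le v y.
Proof.
move=> hxy.
suff H : forall n v, #|[set w | plt x w && le w v]| <= n -> plt x v -> le v y -> exists u, cov x u && le u y.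
  by apply: (H _ y (leqnn _) hxy); apply: Hr.
elim=> [|n IH] v hc hv hvy.
  have hin : v \in [set w | plt x w && le w v] by rewrite inE hv Hr.
  by move: hc; rewrite leqn0 => /eqP/cards0_eq E; rewrite E inE in hin.
case Hc: (cov x v); first by exists v; rewrite Hc hvy.
have: [exists z in [set: T], plt x z && plt z v].
  by move/negbT: Hc; rewrite /covers !in_setT hv /= negbK.
case/existsP=> z /andP [_ /andP [h1 h2]].
apply: (IH z) => //; last by case/andP: h2 => h2' _; apply: Ht h2' hvy.
rewrite -ltnS; apply: leq_trans hc; apply: proper_card; apply/properP; split.
  apply/subsetP=> w; rewrite !inE => /andP [-> hw] /=; apply: Ht hw _; by case/andP: h2.
exists v; first by rewrite inE hv Hr.
rewrite inE negb_and; apply/orP; right; apply/negP=> hvz.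
by case/andP: h2 => hzv /eqP; apply; apply: Ha.
Qed.

Lemma ex_cov_below x y : plt x y -> exists z, le x z && cov z y.
Proof.
move=> hxy.
suff H : forall n v, #|[set w | le v w && plt w y]| <= n -> plt v y -> le x v -> exists u, le x u && cov u y.
  by apply: (H _ x (leqnn _) hxy); apply: Hr.
elim=> [|n IH] v hc hv hxv.
  have hin : v \in [set w | le v w && plt w y] by rewrite inE hv Hr.
  by move: hc; rewrite leqn0 => /eqP/cards0_eq E; rewrite E inE in hin.
case Hc: (cov v y); first by exists v; rewrite Hc hxv.
have: [exists z in [set: T], plt v z && plt z y].
  by move/negbT: Hc; rewrite /covers !in_setT hv /= negbK.
case/existsP=> z /andP [_ /andP [h1 h2]].
apply: (IH z) => //; last by case/andP: h1 => h1' _; apply: Ht hxv h1'.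
rewrite -ltnS; apply: leq_trans hc; apply: proper_card; apply/properP; split.
  apply/subsetP=> w; rewrite !inE => /andP [hw ->]; rewrite andbT; apply: Ht hw; by case/andP: h1.
exists v; first by rewrite inE hv Hr.
rewrite inE negb_and; apply/orP; left; apply/negP=> hzv.
by case/andP: h1 => hvz /eqP; apply; apply: Ha.
Qed.


Lemma notincE x y : ~~ inc x y -> le x y || le y x.
Proof. by rewrite /incomp !in_setT /= negb_and !negbK. Qed.

Lemma pltI x y : le x y -> x != y -> plt x y.
Proof. by move=> h1 h2; rewrite pltE h1 h2. Qed.

Lemma pltle x y : plt x y -> le x y.
Proof. by case/andP. Qed.

Lemma covle x y : cov x y -> le x y.
Proof. by move/covE/pltle. Qed.

Lemma two_lower x y c : cov x c -> cov y c -> x != y -> inc x y.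
Proof.
move=> hx hy hxy; apply: incI; apply/negP=> h.
  exact: (cov_nb hx (pltI h hxy) (covE hy)).
by apply: (cov_nb hy (pltI h _) (covE hx)); rewrite eq_sym.
Qed.

Lemma two_upper b x y : cov b x -> cov b y -> x != y -> inc x y.
Proof.
move=> hx hy hxy; apply: incI; apply/negP=> h.
  exact: (cov_nb hy (covE hx) (pltI h hxy)).
by apply: (cov_nb hx (covE hy) (pltI h _)); rewrite eq_sym.
Qed.

Lemma K1 a b c d1 : cov a c -> cov b c -> b != a -> nd (a,d1) ->
  (forall x, ~~ nd (x,c)) -> nd (b,d1).
Proof.
move=> hac hbc hba hnd H.
have [a2 [d2 [had1 ha2d1 had2 hinc2]]] := ndE hnd.
have hd1c : d1 != c by apply/eqP=> E; subst d1; move: (H a); rewrite hnd.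
have hcd1 : c != d1 by rewrite eq_sym.
have [ncd1 nd1c] := incE (two_upper hac had1 hcd1).
have hab : a != b by rewrite eq_sym.
have [nab nba] := incE (two_lower hac hbc hab).
have N2 : forall z y, cov z c -> cov a y -> ~~ inc z y.
  by move=> z y h1 h2; apply/negP=> h3; move: (H a); rewrite (ndI hac h1 h2 h3).
have hbd1 : le b d1.
  case/orP: (notincE (N2 _ _ hbc had1)) => // h.
  by move: nab; rewrite (Ht (covle had1) h).
have hbned1 : b != d1 by apply/eqP=> E; subst b; move: nd1c; rewrite (covle hbc).
have [na2d2 nd2a2] := incE hinc2.
have ha2c : inc a2 c.
  apply: incI; apply/negP=> h.
    have ha2nec : a2 != c by apply/eqP=> E; subst a2; move: ncd1; rewrite (covle ha2d1).
    have [z /andP [ha2z hzc]] := ex_cov_below (pltI h ha2nec).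
    case: (eqVneq z a) => [Ez|hza].
      by subst z; move: na2d2; rewrite (Ht ha2z (covle had2)).
    case: (eqVneq d2 c) => [Ed|hd2c].
      by subst d2; move: na2d2; rewrite h.
    case/orP: (notincE (N2 _ _ hzc had2)) => h'.
      by move: na2d2; rewrite (Ht ha2z h').
    exact: (cov_nb hac (covE had2) (pltI (Ht h' (covle hzc)) hd2c)).
  by move: ncd1; rewrite (Ht h (covle ha2d1)).
have [v /andP [hbv hvd1]] := ex_cov_above (pltI hbd1 hbned1).
have hvc : v != c by apply/eqP=> E; subst v; move: ncd1; rewrite hvd1.
have hav : le a v.
  have : ~~ inc a v by apply/negP=> h; move: (H b); rewrite (ndI hbc hac hbv h).
  case/notincE/orP=> // h.
  by move: nba; rewrite (Ht (covle hbv) h).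
have Ev : v = d1.
  case: (eqVneq v d1) => // hne; exfalso.
  have hanv : a != v by apply/eqP=> E; subst v; move: nba; rewrite (covle hbv).
  exact: (cov_nb had1 (pltI hav hanv) (pltI hvd1 hne)).
subst v; exact: (ndI hbv ha2d1 hbc ha2c).
Qed.

Lemma K2 a1 b c d : cov b c -> cov b d -> c != d -> nd (a1,d) ->
  (forall y, ~~ nd (b,y)) -> nd (a1,c).
Proof.
move=> hbc hbd hcd hnd H.
have [a3 [d3 [ha1d ha3d ha1d3 hinc3]]] := ndE hnd.
have ha1b : a1 != b by apply/eqP=> E; subst a1; move: (H d); rewrite hnd.
have [na1b nba1] := incE (two_lower ha1d hbd ha1b).
have [ncd ndc] := incE (two_upper hbc hbd hcd).
have N2 : forall z y, cov b y -> cov z d -> ~~ inc z y.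
  by move=> z y h1 h2; apply/negP=> h3; move: (H d); rewrite (ndI hbd h2 h1 h3).
have ha1c : le a1 c.
  case/orP: (notincE (N2 _ _ hbc ha1d)) => // h.
  by move: nba1; rewrite (Ht (covle hbc) h).
have ha1nec : a1 != c by apply/eqP=> E; subst a1; move: ncd; rewrite (covle ha1d).
have [na3d3 nd3a3] := incE hinc3.
have hbd3 : inc b d3.
  apply: incI; apply/negP=> h.
    have hbned3 : b != d3 by apply/eqP=> E; subst d3; move: na1b; rewrite (covle ha1d3).
    have [z /andP [hbz hzd3]] := ex_cov_above (pltI h hbned3).
    case: (eqVneq z d) => [Ez|hzd].
      by subst z; move: na3d3; rewrite (Ht (covle ha3d) hzd3).
    case/orP: (notincE (N2 _ _ hbz ha3d)) => h'.
      by move: na3d3; rewrite (Ht h' hzd3).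
    exact: (cov_nb hbd (covE hbz) (pltI (Ht h' (covle ha3d)) hzd)).
  by move: na1b; rewrite (Ht (covle ha1d3) h).
have [v /andP [ha1v hvc]] := ex_cov_below (pltI ha1c ha1nec).
have hvd : le v d.
  have : ~~ inc v d by apply/negP=> h; move: (H c); rewrite (ndI hbc hvc hbd h).
  case/notincE/orP=> // h.
  by move: ndc; rewrite (Ht h (covle hvc)).
have Ev : v = a1.
  case: (eqVneq v a1) => // hne; exfalso.
  have hvnd : v != d by apply/eqP=> E; subst v; move: ndc; rewrite (covle hvc).
  by apply: (cov_nb ha1d (pltI ha1v _) (pltI hvd hvnd)); rewrite eq_sym.
subst v; exact: (ndI hvc hbc ha1d3 hbd3).
Qed.


Lemma concl b c a0 d0 : cov b c -> cov a0 c -> a0 != b -> cov b d0 -> d0 != c ->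
  (exists x, nd (x,c)) \/ (exists y, nd (b,y)) ->
  (b,c) \in Ndiag [set: T] le :|: Aset [set: T] le.
Proof.
move=> hbc hac hab hbd hdc hor.
rewrite in_setU !inE; case: (boolP (nd (b,c))) => //= hn.
rewrite /inA /= hbc hn /=.
have hcd : c != d0 by rewrite eq_sym.
case: hor => [[x hx] | [y hy]].
  have [? [? [hxc _ _ _]]] := ndE hx.
  have hxb : x != b by apply/eqP=> E; subst x; rewrite hx in hn.
  apply/existsP; exists x; rewrite in_setT /=; apply/existsP; exists d0.
  by rewrite in_setT /= (covE hxc) (covE hbd) (two_lower hxc hbc hxb) (two_upper hbc hbd hcd) hx.
have [? [? [hby _ _ _]]] := ndE hy.
have hcy : c != y by apply/eqP=> E; subst y; rewrite hy in hn.
apply/existsP; exists a0; rewrite in_setT /=; apply/existsP; exists y.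
by rewrite in_setT /= (covE hac) (covE hby) (two_lower hac hbc hab) (two_upper hbc hby hcy) hy orbT.
Qed.

End P.

Section F.
Variables (T : finType) (le : rel T).
Hypotheses (Hr : po_refl le) (Ha : po_antisym le) (Ht : po_trans le).
Variables (U : finType) (S : {set U}) (L : rel U) (orig : T -> U) (isd : pred U) (lo hi : U -> T).
Hypotheses (HO : forall x, orig x \in S)
  (HOd : forall x, isd (orig x) = false)
  (HN : forall z, z \in S -> ~~ isd z -> z = orig (lo z))
  (Loo : forall x y, L (orig x) (orig y) = le x y)
  (Lod : forall x u, u \in S -> isd u -> L (orig x) u = le x (lo u))
  (Ldo : forall u y, u \in S -> isd u -> L u (orig y) = le (hi u) y)
  (Ldd : forall u w, u \in S -> w \in S -> isd u -> isd w ->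
     L u w = (u == w) || le (hi u) (lo w)).

Local Notation covS := (covers S L).
Local Notation cov := (covers [set: T] le).
Local Notation nd := (ndiag [set: T] le).

Lemma orig_inj : injective orig.
Proof.
move=> x y E; apply: Ha.
  by rewrite -Loo E Loo Hr.
by rewrite -Loo E Loo Hr.
Qed.

Lemma covS_nb x y z : covS x y -> z \in S -> plt L x z -> plt L z y -> False.
Proof.
case/and4P=> _ _ _ /existsPn H hz h1 h2.
by move: (H z); rewrite hz h1 h2.
Qed.

Lemma covS_mem x y : covS x y -> x \in S /\ y \in S.
Proof. by case/and4P. Qed.

Lemma covS_plt x y : covS x y -> plt L x y.
Proof. by case/and4P. Qed.

Lemma covS_L x y : covS x y -> L x y.
Proof. by move/covS_plt/andP=> []. Qed.

Lemma pltO x y : plt L (orig x) (orig y) = plt le x y.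
Proof. by rewrite /plt Loo (inj_eq orig_inj). Qed.

Lemma dneq u x : isd u -> u != orig x.
Proof. by move=> hu; apply/eqP=> E; move: hu; rewrite E HOd. Qed.

Lemma below_dummy u z : isd u -> covS z u -> z = orig (lo u).
Proof.
move=> hu hc; have [hz huS] := covS_mem hc.
case: (eqVneq z (orig (lo u))) => // hne; exfalso.
have /andP [Lzu znu] := covS_plt hc.
apply: (covS_nb hc (HO (lo u))).
  rewrite /plt hne andbT.
  case hz' : (isd z).
    by rewrite Ldo //; move: Lzu; rewrite Ldd // (negbTE znu).
  have E := HN hz (negbT hz').
  by move: Lzu; rewrite E Loo Lod.
by rewrite /plt Lod // Hr /= eq_sym dneq.
Qed.

Lemma above_dummy u z : isd u -> covS u z -> z = orig (hi u).
Proof.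
move=> hu hc; have [huS hz] := covS_mem hc.
case: (eqVneq z (orig (hi u))) => // hne; exfalso.
have /andP [Luz unz] := covS_plt hc.
apply: (covS_nb hc (HO (hi u))).
  by rewrite /plt Ldo // Hr /= dneq.
rewrite /plt eq_sym hne andbT.
case hz' : (isd z).
  by rewrite Lod //; move: Luz; rewrite Ldd // (negbTE unz).
have E := HN hz (negbT hz').
by move: Luz; rewrite E Loo Ldo.
Qed.

Lemma G1 p : p \in Ndiag S L -> ~~ isd p.1 /\ ~~ isd p.2.
Proof.
rewrite inE; case/existsP=> a /existsP [d /and4P [h1 h2 h3 h4]].
case/and4P: h4 => _ _ h4 h5.
split; apply/negP=> hd.
  have E1 := above_dummy hd h1; have E2 := above_dummy hd h3.
  by move: h4; rewrite E2 -E1 (covS_L h2).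
have E1 := below_dummy hd h1; have E2 := below_dummy hd h2.
by move: h4; rewrite E2 -E1 (covS_L h3).
Qed.

Lemma G2 x y : covS (orig x) (orig y) -> cov x y.
Proof.
move=> h; apply: covI; first by rewrite -pltO; exact: covS_plt.
by move=> z h1 h2; apply: (covS_nb h (HO z)); rewrite pltO.
Qed.

Lemma G3 u c : isd u -> covS u (orig c) -> hi u = c.
Proof.
move=> hu h; have [huS _] := covS_mem h.
case: (eqVneq (hi u) c) => // hne; exfalso.
apply: (covS_nb h (HO (hi u))).
  by rewrite /plt Ldo // Hr dneq.
by rewrite pltO; apply: pltI => //; rewrite -(Ldo _ huS hu); exact: covS_L.
Qed.

Lemma G3' u b : isd u -> covS (orig b) u -> lo u = b.
Proof.
move=> hu h; have [_ huS] := covS_mem h.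
case: (eqVneq (lo u) b) => // hne; exfalso.
apply: (covS_nb h (HO (lo u))); last by rewrite /plt Lod // Hr eq_sym dneq.
by rewrite pltO; apply: pltI; [rewrite -(Lod _ huS hu); exact: covS_L | rewrite eq_sym].
Qed.

Lemma G4 u : u \in S -> isd u -> ~~ covS (orig (lo u)) (orig (hi u)).
Proof.
move=> huS hu; apply/negP=> h; apply: (covS_nb h huS).
  by rewrite /plt Lod // Hr eq_sym dneq.
by rewrite /plt Ldo // Hr dneq.
Qed.

Lemma incO x y : incomp S L (orig x) (orig y) -> incomp [set: T] le x y.
Proof. by case/and4P=> _ _ h1 h2; apply: incI; rewrite -Loo. Qed.

Hypothesis HdE : forall u, u \in S -> isd u -> nd (lo u, hi u).

Lemma KL1 a b c : (orig a, orig c) \in Ndiag S L -> cov b c -> b != a ->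
  (exists x, nd (x,c)) \/ (exists y, nd (b,y)).
Proof.
rewrite inE => /existsP [a1' /existsP [d1' /and4P [h1 h2 h3 h4]]] hbc hba.
simpl in h1, h2, h3.
have hac := G2 h1.
case: (boolP [exists x, nd (x,c)]) => [/existsP [x hx] | /existsPn H]; first by left; exists x.
right.
have [ha1S _] := covS_mem h2.
case: (boolP (isd a1')) => ha1.
  have E := G3 ha1 h2; move: (H (lo a1')); by rewrite -E HdE.
have Ea := HN ha1S ha1; rewrite Ea in h2 h4.
have ha1c := G2 h2.
have [_ hd1S] := covS_mem h3.
case: (boolP (isd d1')) => hd1.
  have E := G3' hd1 h3.
  exists (hi d1'); apply: K1 hac hbc hba _ H => //.
  by rewrite -E; apply: HdE.
have Ed := HN hd1S hd1; rewrite Ed in h3 h4.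
by move: (H a); rewrite (ndI (G2 h1) ha1c (G2 h3) (incO h4)).
Qed.

Lemma KL2 b c d : (orig b, orig d) \in Ndiag S L -> cov b c -> c != d ->
  (exists x, nd (x,c)) \/ (exists y, nd (b,y)).
Proof.
rewrite inE => /existsP [a1' /existsP [d1' /and4P [h1 h2 h3 h4]]] hbc hcd.
simpl in h1, h2, h3.
have hbd := G2 h1.
case: (boolP [exists y, nd (b,y)]) => [/existsP [y hy] | /existsPn H]; first by right; exists y.
left.
have [_ hd1S] := covS_mem h3.
case: (boolP (isd d1')) => hd1.
  have E := G3' hd1 h3; move: (H (hi d1')); by rewrite -E HdE.
have Ed := HN hd1S hd1; rewrite Ed in h3 h4.
have hbd1 := G2 h3.
have [ha1S _] := covS_mem h2.
case: (boolP (isd a1')) => ha1.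
  have E := G3 ha1 h2.
  exists (lo a1'); apply: K2 hbc hbd hcd _ H => //.
  by rewrite -E; apply: HdE.
have Ea := HN ha1S ha1; rewrite Ea in h2 h4.
by move: (H d); rewrite (ndI hbd (G2 h2) hbd1 (incO h4)).
Qed.

End F.

Lemma memSN_inl (T : finType) (S : {set T}) (le : rel T) x :
  (inl x \in SN_set S le) = (x \in S).
Proof.
have inj : injective (@inl T (T * T)) by move=> ? ? [].
rewrite /SN_set in_setU mem_imset //.
by case: imsetP => [[q _] //|_]; rewrite orbF.
Qed.

Lemma memSN_inr (T : finType) (S : {set T}) (le : rel T) q :
  (inr q \in SN_set S le) = (q \in Ndiag S le).
Proof.
have inj : injective (@inr T (T * T)) by move=> ? ? [].
rewrite /SN_set in_setU mem_imset //.
by case: imsetP => [[x _] //|_].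
Qed.

Section Main.
Variables (T : finType) (le : rel T).
Hypotheses (Hr : po_refl le) (Ha : po_antisym le) (Ht : po_trans le).

Definition lo1 (e : SNT T) : T := match e with inl x => x | inr q => q.1 end.
Definition hi1 (e : SNT T) : T := match e with inl x => x | inr q => q.2 end.
Definition isd1 : pred (SNT T) := fun e => if e is inr _ then true else false.
Local Notation S1 := (SN_set [set: T] le).
Local Notation L1 := (SN_le le).
Local Notation cov := (covers [set: T] le).
Local Notation nd := (ndiag [set: T] le).

Lemma h1O x : inl x \in S1. Proof. by rewrite memSN_inl in_setT. Qed.
Lemma h1Od x : isd1 (inl x) = false. Proof. by []. Qed.
Lemma h1N z : z \in S1 -> ~~ isd1 z -> z = inl (lo1 z). Proof. by case: z. Qed.
Lemma h1oo x y : L1 (inl x) (inl y) = le x y. Proof. by []. Qed.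
Lemma h1od x u : u \in S1 -> isd1 u -> L1 (inl x) u = le x (lo1 u). Proof. by case: u. Qed.
Lemma h1do u y : u \in S1 -> isd1 u -> L1 u (inl y) = le (hi1 u) y. Proof. by case: u. Qed.
Lemma h1dd u w : u \in S1 -> w \in S1 -> isd1 u -> isd1 w ->
  L1 u w = (u == w) || le (hi1 u) (lo1 w).
Proof. by case: u => [x|p]; case: w => [y|q]. Qed.
Lemma h1dE u : u \in S1 -> isd1 u -> nd (lo1 u, hi1 u).
Proof. by case: u => [x|[b c]] //; rewrite memSN_inr inE. Qed.

Definition lo2 (z : SNT (SNT T)) : T := match z with inl e => lo1 e | inr p => lo1 p.1 end.
Definition hi2 (z : SNT (SNT T)) : T := match z with inl e => hi1 e | inr p => hi1 p.2 end.
Definition isd2 : pred (SNT (SNT T)) :=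
  fun z => match z with inl (inl _) => false | _ => true end.
Local Notation S2 := (SN_set S1 L1).
Local Notation L2 := (SN_le L1).

Lemma S2_class z : z \in S2 -> isd2 z ->
  (exists q, z = inl (inr q) /\ nd q) \/
  (exists b c, z = inr (inl b, inl c) /\ (inl b, inl c) \in Ndiag S1 L1).
Proof.
case: z => [[x|q]|[e f]] //.
  by rewrite memSN_inl memSN_inr inE => h _; left; exists q.
rewrite memSN_inr => h _.
have [ne nf] := G1 Hr h1O h1Od h1N h1oo h1od h1do h1dd h.
move: ne nf h; case: e => [b|//]; case: f => [c|//] _ _ h.
by right; exists b, c.
Qed.

Lemma edge2 u : u \in S2 -> isd2 u ->
  nd (lo2 u, hi2 u) \/ (inl (lo2 u), inl (hi2 u)) \in Ndiag S1 L1.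
Proof.
move=> h1 h2; case: (S2_class h1 h2) => [[[q1 q2] [-> h]]|[b [c [-> h]]]].
  by left.
by right.
Qed.

Lemma edgecov u : u \in S2 -> isd2 u -> cov (lo2 u) (hi2 u).
Proof.
move=> h1 h2; case: (edge2 h1 h2) => h.
  by have [? [? [hc _ _ _]]] := ndE h.
apply: (G2 Hr Ha h1O h1oo).
by move: h; rewrite inE => /existsP [? /existsP [? /and4P [hc _ _ _]]].
Qed.

Theorem main (S' : {set SNT (SNT T)})
  (HPsub : [set emb2 x | x : T] \subset S')
  (HSsub : S' \subset SN_set (SN_set [set: T] le) (SN_le le)) :
  Ndiag S' (SN_le (SN_le le)) \subset
    [set (emb2 p.1, emb2 p.2) | p in Ndiag [set: T] le :|: Aset [set: T] le].
Proof.
have h2O x : emb2 x \in S' by apply: (subsetP HPsub); apply/imsetP; exists x.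
have h2Od x : isd2 (emb2 x) = false by [].
have h2N z : z \in S' -> ~~ isd2 z -> z = emb2 (lo2 z) by case: z => [[x|q]|p].
have h2oo x y : L2 (emb2 x) (emb2 y) = le x y by [].
have h2od x u : u \in S' -> isd2 u -> L2 (emb2 x) u = le x (lo2 u).
  by case: u => [[y|q]|[[y|q] f]].
have h2do u y : u \in S' -> isd2 u -> L2 u (emb2 y) = le (hi2 u) y.
  by case: u => [[x|q]|[e [x|q]]].
have h2dd u w : u \in S' -> w \in S' -> isd2 u -> isd2 w ->
    L2 u w = (u == w) || le (hi2 u) (lo2 w).
  move=> /(subsetP HSsub) hu /(subsetP HSsub) hw du dw.
  case: (S2_class hu du) => [[p [-> _]] | [b [c [-> _]]]];
  case: (S2_class hw dw) => [[q [-> _]] | [b' [c' [-> _]]]] //.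
have G2_2 := G2 Hr Ha h2O h2oo.
have G3_2 := G3 Hr Ha h2O h2Od h2oo h2do.
have G3'_2 := G3' Hr Ha h2O h2Od h2oo h2od.
have G4_2 := G4 Hr h2Od h2od h2do.
have KL1_1 := KL1 Hr Ha Ht h1O h1Od h1N h1oo h1od h1do h1dE.
have KL2_1 := KL2 Hr Ha Ht h1O h1Od h1N h1oo h1od h1do h1dE.
have inS2 u : u \in S' -> u \in S2 by move/(subsetP HSsub).
apply/subsetP => [[p1 p2]] hp.
have [n1 n2] := G1 Hr h2O h2Od h2N h2oo h2od h2do h2dd hp.
move: hp; rewrite inE => /existsP [a' /existsP [d' /and4P [h1 h2 h3 h4]]].
simpl in n1, n2, h1, h2, h3.
have [hp1S hp2S] := covS_mem h1.
have E1 := h2N _ hp1S n1; have E2 := h2N _ hp2S n2.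
rewrite E1 E2 in h1 h2 h3 h4 *.
move: (lo2 p1) (lo2 p2) h1 h2 h3 h4 => b c h1 h2 h3 h4.
apply/imsetP; exists (b,c) => //.
have hbc := G2_2 _ _ h1.
have [ha'S _] := covS_mem h2.
have [_ hd'S] := covS_mem h3.
case/and4P: (h4) => _ _ n4 n4'.
case: (boolP (isd2 a')) => ha'.
  have Ehi := G3_2 _ _ ha' h2.
  have hab : lo2 a' != b.
    by apply/eqP=> E; move: (G4_2 _ ha'S ha'); rewrite E Ehi h1.
  have hac0 : cov (lo2 a') c by rewrite -Ehi; apply: edgecov => //; apply: inS2.
  have [d0 [hbd0 hd0c]] : exists d0, cov b d0 /\ d0 != c.
    case: (boolP (isd2 d')) => hd'.
      have Elo := G3'_2 _ _ hd' h3.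
      exists (hi2 d'); split; first by rewrite -Elo; apply: edgecov => //; apply: inS2.
      by apply/eqP=> E; move: (G4_2 _ hd'S hd'); rewrite Elo E h1.
    have Ed := h2N _ hd'S hd'; rewrite Ed in h3 n4.
    exists (lo2 d'); split; first exact: G2_2 h3.
    by apply/eqP=> E; move: n4; rewrite E (covS_L h2).
  apply: (concl hbc hac0 hab hbd0 hd0c).
  case: (edge2 (inS2 _ ha'S) ha') => he; rewrite Ehi in he.
    by left; exists (lo2 a').
  by apply: KL1_1 he hbc _; rewrite eq_sym.
have Ea := h2N _ ha'S ha'; rewrite Ea in h2 h4 n4.
have hac0 := G2_2 _ _ h2.
have hab : lo2 a' != b.
  by apply/eqP=> E; move: n4; rewrite E (covS_L h3).
case: (boolP (isd2 d')) => hd'.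
  have Elo := G3'_2 _ _ hd' h3.
  have hbd0 : cov b (hi2 d') by rewrite -Elo; apply: edgecov => //; apply: inS2.
  have hd0c : hi2 d' != c.
    by apply/eqP=> E; move: (G4_2 _ hd'S hd'); rewrite Elo E h1.
  apply: (concl hbc hac0 hab hbd0 hd0c).
  case: (edge2 (inS2 _ hd'S) hd') => he; rewrite Elo in he.
    by right; exists (hi2 d').
  by apply: KL2_1 he hbc _; rewrite eq_sym.
have Ed := h2N _ hd'S hd'; rewrite Ed in h3 h4.
rewrite in_setU; apply/orP; left; rewrite inE.
exact: (ndI hbc hac0 (G2_2 _ _ h3) (incO h2oo h4)).
Qed.

End Main.

Theorem lemma5 (T : finType) (le : rel T)
  (Hrefl : po_refl le) (Hanti : po_antisym le) (Htrans : po_trans le)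
  (S' : {set SNT (SNT T)})
  (HPsub : [set emb2 x | x : T] \subset S')
  (HSsub : S' \subset SN_set (SN_set [set: T] le) (SN_le le)) :
  Ndiag S' (SN_le (SN_le le)) \subset
    [set (emb2 p.1, emb2 p.2) | p in Ndiag [set: T] le :|: Aset [set: T] le].
Proof. exact: (main Hrefl Hanti Htrans HPsub HSsub). Qed.
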